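(* Let $K$ be a totally ordered quasi-field of characteristic $1$, $a\in K$, $n\ge1$, let $\varphi:K[X]\to E=K+KX+\dots+KX^{n-1}$ be the $K$-linear map with $\varphi(X^m)=a^qX^r$ for $m=nq+r$, $0\le r<n$, and let $J$ be the ideal of $K[X]$ generated by the $X^{nk}+a^k$, $k\ge1$. If $P,Q\in K[X]$ satisfy $\varphi(P)=\varphi(Q)$, then $P\equiv Q \pmod J$.
   Context: A quasi-field of characteristic $1$ is a commutative semiring $K$ with $1+1=1$ in which every nonzero element is multiplicatively invertible; it is ordered by $u\le v$ iff $u+v=v$, totally ordered meaning the order is total. Congruence modulo an ideal $J$ of $K[X]$: $P\equiv Q\pmod J$ iff $(P+J)\cap(Q+J)\neq\emptyset$ and for all $U\in J$ and $V\in K[X]$: $PU+V\in J\iff QU+V\in J$. *)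

(* Defs.v *)
From HB Require Import structures.
From mathcomp Require Import all_boot all_order all_algebra.
Set Implicit Arguments. Unset Strict Implicit. Unset Printing Implicit Defensive.
Import GRing.Theory.
Local Open Scope ring_scope.

Definition quasi_field_char1 (K : comNzSemiRingType) : Prop :=
  (1 + 1 = 1 :> K) /\ (forall x : K, x != 0 -> exists y : K, x * y = 1).

Definition qle (K : comNzSemiRingType) (u v : K) : Prop := u + v = v.

Definition totally_ordered (K : comNzSemiRingType) : Prop :=
  forall u v : K, qle u v \/ qle v u.

Definition phi (K : comNzSemiRingType) (n : nat) (a : K) (P : {poly K}) : {poly K} :=
  \sum_(i < size P) (P`_i * a ^+ (i %/ n))%:P * 'X^(i %% n).

Definition inJ (K : comNzSemiRingType) (n : nat) (a : K) (P : {poly K}) : Prop :=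
  exists s : seq (nat * {poly K}),
    all (fun kc => 0 < kc.1)%N s /\
    P = \sum_(kc <- s) kc.2 * ('X^(n * kc.1) + (a ^+ kc.1)%:P).

Definition congr_mod (K : comNzSemiRingType) (J : {poly K} -> Prop)
    (P Q : {poly K}) : Prop :=
  (exists U V : {poly K}, J U /\ J V /\ P + U = Q + V) /\
  (forall U V : {poly K}, J U -> (J (P * U + V) <-> J (Q * U + V))).

(* Main.v *)
Require Import Defs.
From HB Require Import structures.
From mathcomp Require Import all_boot all_order all_algebra.
From Stdlib Require Import Lia.
Local Open Scope ring_scope.

Module Aux.
Set Implicit Arguments. Unset Strict Implicit. Unset Printing Implicit Defensive.
Import GRing.Theory.
Section Idem.
Variable V : nmodType.
Hypothesis idem : forall x : V, x + x = x.
Definition lev (x y : V) := x + y = y.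

Lemma lev_refl x : lev x x. Proof. exact: idem. Qed.
Lemma lev_trans x y z : lev x y -> lev y z -> lev x z.
Proof. by rewrite /lev => H1 H2; rewrite -H2 addrA H1. Qed.
Lemma lev_anti x y : lev x y -> lev y x -> x = y.
Proof. by rewrite /lev => H1 H2; rewrite -H1 addrC. Qed.
Lemma lev_addr x y : lev x (x + y).
Proof. by rewrite /lev addrA idem. Qed.
Lemma lev_addl x y : lev y (x + y).
Proof. by rewrite addrC; apply: lev_addr. Qed.
Lemma lev0 x : lev 0 x. Proof. by rewrite /lev add0r. Qed.
Lemma lev_lub x y z : lev x z -> lev y z -> lev (x + y) z.
Proof. by rewrite /lev => H1 H2; rewrite -addrA H2 H1. Qed.
Lemma lev_add x y z w : lev x y -> lev z w -> lev (x + z) (y + w).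
Proof. by rewrite /lev => H1 H2; rewrite addrACA H1 H2. Qed.
Lemma levD_trans x y z : lev x y -> lev x (y + z).
Proof. move=> H; apply: lev_trans H (lev_addr _ _). Qed.
Lemma lev_le0 x : lev x 0 -> x = 0.
Proof. by rewrite /lev addr0. Qed.

Lemma lev_sum (I : Type) (r : seq I) (Pr : pred I) (F G : I -> V) :
  (forall i, Pr i -> lev (F i) (G i)) ->
  lev (\sum_(i <- r | Pr i) F i) (\sum_(i <- r | Pr i) G i).
Proof.
move=> H; apply: (big_ind2 lev); first exact: lev_refl.
  by move=> ? ? ? ?; apply: lev_add.
exact: H.
Qed.
Lemma lev_sum_lub (I : Type) (r : seq I) (Pr : pred I) (F : I -> V) z :
  (forall i, Pr i -> lev (F i) z) -> lev (\sum_(i <- r | Pr i) F i) z.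
Proof.
move=> H; apply: (big_ind (fun x => lev x z)); first exact: lev0.
  by move=> ? ?; apply: lev_lub.
exact: H.
Qed.
End Idem.

Lemma nat_split (i j m : nat) : (0 < m)%N -> (j < i)%N -> (j %% m = i %% m)%N ->
  exists k, [/\ (0 < k)%N, i = (j + m * k)%N & (i %/ m = k + j %/ m)%N].
Proof.
move=> hn hji hm.
have e1 := divn_eq i m; have e2 := divn_eq j m.
have hle : (j %/ m <= i %/ m)%N by apply: leq_div2r; apply: ltnW.
have hne : (j %/ m != i %/ m)%N.
  apply/negP => /eqP E; move: hji; rewrite e1 e2 E hm ltnn //.
exists (i %/ m - j %/ m)%N.
move: hle hne e1 e2 hm; set qi := (i %/ m)%N; set qj := (j %/ m)%N.
set ri := (i %% m)%N; set rj := (j %% m)%N.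
move=> /leP hle /eqP hne e1 e2 hm.
rewrite -?plusE -?multE -?minusE in e1 e2 *.
split; first by apply/ltP; lia.
all: lia.
Qed.

Section Main.
Variable K : comNzSemiRingType.
Variable a : K.
Variable n : nat.
Hypothesis hK : quasi_field_char1 K.
Hypothesis hord : totally_ordered K.
Hypothesis hn : (1 <= n)%N.

Lemma idemK (x : K) : x + x = x.
Proof. by case: hK => h _; rewrite -{1 2}[x]mulr1 -mulrDr h mulr1. Qed.
Lemma idemP (p : {poly K}) : p + p = p.
Proof. by apply/polyP => i; rewrite coefD idemK. Qed.

Lemma lev_split (x y z : K) : lev x (y + z) -> lev x y \/ lev x z.
Proof.
move=> Hx; case: (hord y z) => H; rewrite /qle in H.
  by right; rewrite -H.
by left; rewrite addrC H in Hx.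
Qed.

Lemma lev_mul (x y z : K) : lev x y -> lev (x * z) (y * z).
Proof. by rewrite /lev => H; rewrite -mulrDl H. Qed.
Lemma lev_mull (x y z : K) : lev x y -> lev (z * x) (z * y).
Proof. by rewrite /lev => H; rewrite -mulrDr H. Qed.

Lemma lev_sum_split (I : eqType) (r : seq I) (F : I -> K) x :
  lev x (\sum_(i <- r) F i) -> x = 0 \/ exists2 i, i \in r & lev x (F i).
Proof.
elim: r => [|y r IH]; first by rewrite big_nil => /lev_le0; left.
rewrite big_cons => /lev_split [H|/IH [->|[i Hi H]]].
- by right; exists y => //; rewrite mem_head.
- by left.
- by right; exists i => //; rewrite inE Hi orbT.
Qed.

Lemma lev_term (N : nat) (F : 'I_N -> K) (i : 'I_N) : lev (F i) (\sum_(j < N) F j).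
Proof. rewrite (bigD1 i) //=; exact: lev_addr idemK _ _. Qed.

Definition g (F : {poly K}) i := F`_i * a ^+ (i %/ n).

Definition Pchar (F : {poly K}) := forall i, g F i != 0 ->
  exists j, [/\ j != i, j %% n = i %% n & lev (g F i) (g F j)]%N.

Lemma gD F G i : g (F + G) i = g F i + g G i.
Proof. by rewrite /g coefD mulrDl. Qed.

Lemma Pchar0 : Pchar 0.
Proof. by move=> i; rewrite /g coef0 mul0r eqxx. Qed.

Lemma PcharD F G : Pchar F -> Pchar G -> Pchar (F + G).
Proof.
move=> HF HG i; rewrite gD.
case: (hord (g F i) (g G i)); rewrite /qle => H; [rewrite H => Hi | rewrite addrC H => Hi].
- have [j [Hj1 Hj2 Hj3]] := HG i Hi; exists j; split => //.
  by rewrite gD; apply: lev_trans Hj3 (lev_addl idemK _ _).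
- have [j [Hj1 Hj2 Hj3]] := HF i Hi; exists j; split => //.
  by rewrite gD; apply: lev_trans Hj3 (lev_addr idemK _ _).
Qed.

Lemma coef_mon (c : K) l m : (c%:P * 'X^l)`_m = if m == l then c else 0.
Proof. by rewrite coefCM coefXn; case: eqP => _; rewrite ?mulr1 ?mulr0. Qed.

Lemma gen_expand (c : K) l k :
  (c%:P * 'X^l) * ('X^(n * k) + (a ^+ k)%:P)
  = c%:P * 'X^(l + n * k) + (c * a ^+ k)%:P * 'X^l.
Proof.
rewrite mulrDr -mulrA -exprD polyCM; congr (_ + _).
by rewrite -mulrA [_ * (a ^+ k)%:P]mulrC mulrA.
Qed.

Lemma Pchar_mon (c : K) l k : (0 < k)%N -> Pchar ((c%:P * 'X^l) * ('X^(n * k) + (a ^+ k)%:P)).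
Proof.
move=> hk; rewrite gen_expand => i.
have Hneq : (l + n * k != l)%N.
  by rewrite -{2}[l]addn0 eqn_add2l muln_eq0 negb_or -!lt0n (leq_trans _ hn).
have Hneq' : (l == l + n * k)%N = false by rewrite eq_sym (negbTE Hneq).
have Hdiv : ((l + n * k) %/ n = k + l %/ n)%N by rewrite addnC mulnC divnMDl.
rewrite /g coefD !coef_mon.
have [->|Hi1] := eqVneq i (l + n * k)%N.
  rewrite (negbTE Hneq) addr0 => Hi; exists l; split.
    by rewrite eq_sym.
    by rewrite addnC mulnC modnMDl.
  rewrite coefD !coef_mon Hneq' eqxx /= add0r Hdiv exprD mulrA.
  exact: lev_refl idemK _.
have [->|Hi2] := eqVneq i l.
  rewrite add0r => Hi; exists (l + n * k)%N; split.
    by [].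
    by rewrite addnC mulnC modnMDl.
  rewrite coefD !coef_mon eqxx (negbTE Hneq) addr0 Hdiv exprD mulrA.
  exact: lev_refl idemK _.
by rewrite add0r mul0r eqxx.
Qed.


Lemma Pchar_sum (I : Type) (r : seq I) (Pr : pred I) (F : I -> {poly K}) :
  (forall i, Pr i -> Pchar (F i)) -> Pchar (\sum_(i <- r | Pr i) F i).
Proof.
move=> H; apply: (big_ind Pchar); [exact: Pchar0 | exact: PcharD | exact: H].
Qed.

Lemma Pchar_gen (C : {poly K}) k : (0 < k)%N -> Pchar (C * ('X^(n * k) + (a ^+ k)%:P)).
Proof.
move=> hk; rewrite -[C]coefK poly_def mulr_suml; apply: Pchar_sum => l _.
rewrite -mul_polyC; exact: Pchar_mon.
Qed.

Lemma inJ_Pchar F : inJ n a F -> Pchar F.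
Proof.
case=> s [Hs ->]; elim: s Hs => [|[k C] s IH] /=; first by rewrite big_nil => _; exact: Pchar0.
by case/andP => Hk Hs; rewrite big_cons; apply: PcharD; [exact: Pchar_gen | exact: IH].
Qed.

Lemma inJ0 : inJ n a 0.
Proof. by exists [::]; rewrite big_nil. Qed.

Lemma inJD F G : inJ n a F -> inJ n a G -> inJ n a (F + G).
Proof.
case=> s1 [H1 ->] [s2 [H2 ->]]; exists (s1 ++ s2); split; first by rewrite all_cat H1 H2.
by rewrite big_cat.
Qed.

Lemma inJM C F : inJ n a F -> inJ n a (C * F).
Proof.
case=> s [H ->]; exists [seq (kc.1, C * kc.2) | kc <- s]; split.
  by rewrite all_map; apply: sub_all H => kc.
by rewrite big_map mulr_sumr; apply: eq_bigr => kc _; rewrite mulrA.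
Qed.

Lemma inJ_gen C k : (0 < k)%N -> inJ n a (C * ('X^(n * k) + (a ^+ k)%:P)).
Proof. by move=> hk; exists [:: (k, C)]; rewrite big_seq1 /= hk. Qed.

Lemma inJ_sum (I : Type) (r : seq I) (Pr : pred I) (F : I -> {poly K}) :
  (forall i, Pr i -> inJ n a (F i)) -> inJ n a (\sum_(i <- r | Pr i) F i).
Proof.
move=> H; apply: (big_ind (inJ n a)); [exact: inJ0 | exact: inJD | exact: H].
Qed.

Lemma mon_le (F : {poly K}) c i : lev c F`_i -> lev (c%:P * 'X^i) F.
Proof.
move=> H; apply/polyP => m; rewrite coefD coef_mon.
by case: eqP => [->|_]; [exact: H | rewrite add0r].
Qed.

Lemma lev_cancel (x y w w' : K) : lev (x * w) (y * w) -> w * w' = 1 -> lev x y.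
Proof.
move=> H Hw; have := lev_mul w' H; by rewrite -!mulrA Hw !mulr1.
Qed.

Lemma inv_ex (x : K) : x != 0 -> exists y, x * y = 1.
Proof. by case: hK => _ h; apply: h. Qed.

Lemma gne0_pow F i : g F i != 0 -> a ^+ (i %/ n) != 0.
Proof. by rewrite /g; apply: contraNneq => ->; rewrite mulr0. Qed.

Lemma lev_ne0 (x y : K) : lev x y -> x != 0 -> y != 0.
Proof. by move=> H; apply: contraNneq => Hy; rewrite Hy in H; apply/eqP/lev_le0. Qed.


Lemma per_index F i : Pchar F ->
  exists B, [/\ inJ n a B, lev ((F`_i)%:P * 'X^i) B & lev B F].
Proof.
move=> HF.
have [Fi0|FiN] := eqVneq F`_i 0.
  exists 0; split; [exact: inJ0 | by rewrite Fi0 polyC0 mul0r; exact: (lev_refl (@idemP) 0) | exact: lev0].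
have [x0|xN] := eqVneq (g F i) 0.
  have hq : (0 < i %/ n)%N.
    rewrite lt0n; apply/negP => /eqP Hq; move: x0; rewrite /g Hq expr0 mulr1.
    by apply/eqP.
  exists ((F`_i)%:P * 'X^i); split.
  - have := inJ_gen ((F`_i)%:P * 'X^(i %% n)) hq.
    rewrite gen_expand; move: x0; rewrite /g => ->; rewrite mul0r addr0.
    by rewrite mulnC addnC -divn_eq.
  - exact: lev_refl (@idemP) _.
  - exact/mon_le/(lev_refl (@idemK)).
have [j [Hji Hjm Hle]] := HF i xN.
have gjN : g F j != 0 := lev_ne0 Hle xN.
case: (ltngtP j i) => Hc; last by rewrite Hc eqxx in Hji.
- have [k [hk Hi Hd]] := nat_split hn Hc Hjm.
  exists (((F`_i)%:P * 'X^j) * ('X^(n * k) + (a ^+ k)%:P)); split.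
  + exact: inJ_gen.
  + by rewrite gen_expand -Hi; exact: lev_addr (@idemP) _ _.
  + rewrite gen_expand -Hi; apply: lev_lub; first exact/mon_le/(lev_refl (@idemK)).
    apply: mon_le.
    have [y Hy] := inv_ex (gne0_pow gjN).
    apply: (lev_cancel _ Hy).
    by move: Hle; rewrite /g Hd exprD mulrA.
- have [k [hk Hi Hd]] := nat_split hn Hc (esym Hjm).
  have akN : a ^+ k != 0.
    by move: (gne0_pow gjN); rewrite Hd exprD; apply: contraNneq => ->; rewrite mul0r.
  have [y Hy] := inv_ex akN.
  have [z Hz] := inv_ex (gne0_pow xN).
  exists (((F`_i * y)%:P * 'X^i) * ('X^(n * k) + (a ^+ k)%:P)); split.
  + exact: inJ_gen.
  + by rewrite gen_expand -mulrA [y * _]mulrC Hy mulr1; exact: lev_addl (@idemP) _ _.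
  + rewrite gen_expand -Hi; apply: lev_lub; last first.
      by rewrite -mulrA [y * _]mulrC Hy mulr1; exact/mon_le/(lev_refl (@idemK)).
    apply: mon_le.
    have H1 : lev F`_i (F`_j * a ^+ k).
      apply: (lev_cancel _ Hz).
      by move: Hle; rewrite /g Hd exprD mulrA.
    have := lev_mul y H1; by rewrite -mulrA Hy mulr1.
Qed.


Lemma Pchar_inJ F : Pchar F -> inJ n a F.
Proof.
move=> HF.
have H : forall N, exists B, [/\ inJ n a B, lev (\sum_(i < N) (F`_i)%:P * 'X^i) B & lev B F].
  elim=> [|N [B [HB1 HB2 HB3]]].
    by exists 0; rewrite big_ord0; split; [exact: inJ0 | exact: (lev_refl (@idemP)) | exact: lev0].
  have [B' [HB1' HB2' HB3']] := per_index N HF.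
  exists (B + B'); rewrite big_ord_recr /=; split.
  - exact: inJD.
  - exact: lev_add.
  - exact: lev_lub.
have [B [HB1 HB2 HB3]] := H (size F).
have -> : F = B.
  apply: lev_anti HB3 => //; move: HB2.
  suff -> : \sum_(i < size F) (F`_i)%:P * 'X^i = F by [].
  by rewrite -[RHS]coefK poly_def; apply: eq_bigr => i _; rewrite mul_polyC.
exact: HB1.
Qed.

Lemma phi_coef P m : (phi n a P)`_m = \sum_(i < size P) (g P i * ((m == i %% n)%N%:R)).
Proof. by rewrite /phi coef_sum; apply: eq_bigr => i _; rewrite coefCM coefXn. Qed.

Lemma phi_le P Q : phi n a P = phi n a Q -> forall s, g P s = 0 \/
  exists s', (s' %% n = s %% n)%N /\ lev (g P s) (g Q s').
Proof.
move=> E s; case: (ltnP s (size P)) => Hs; last by left; rewrite /g nth_default // mul0r.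
have H : lev (g P s) ((phi n a Q)`_(s %% n)).
  rewrite -E phi_coef.
  have := lev_term (fun i : 'I_(size P) => g P i * ((s %% n == i %% n)%N%:R)) (Ordinal Hs).
  by rewrite /= eqxx mulr1.
rewrite phi_coef in H; case: (lev_sum_split H) => [->|[i _]]; first by left.
case: eqP => [Ei|_]; first by rewrite mulr1 => Hi; right; exists i; split.
by rewrite mulr0 => /lev_le0 ->; left.
Qed.

Lemma coefM_ge (Q U : {poly K}) u v :
  lev (Q`_u * U`_v * a ^+ ((u + v) %/ n)) (g (Q * U) (u + v)).
Proof.
rewrite /g coefM; apply: lev_mul.
have Hu : (u < (u + v).+1)%N by rewrite ltnS leq_addr.
have := lev_term (fun w : 'I_((u + v).+1) => Q`_w * U`_(u + v - w)) (Ordinal Hu).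
by rewrite /= addKn.
Qed.

Lemma coefM_split (P U : {poly K}) m x : lev x (g (P * U) m) ->
  x = 0 \/ exists s t, (s + t = m)%N /\ lev x (P`_s * U`_t * a ^+ (m %/ n)).
Proof.
rewrite /g coefM mulr_suml => /lev_sum_split [->|[w _ H]]; first by left.
right; exists (nat_of_ord w), (m - w)%N; split => //.
by rewrite subnKC // -ltnS.
Qed.

Lemma factor (P U : {poly K}) s t : P`_s * U`_t * a ^+ ((s + t) %/ n) =
  g P s * g U t * a ^+ (n <= s %% n + t %% n)%N.
Proof.
rewrite /g divnD // !exprD [in LHS]mulrA; congr (_ * _); exact: mulrACA.
Qed.

Lemma key (P Q U : {poly K}) : phi n a P = phi n a Q -> Pchar U ->
  forall m x i, x != 0 -> lev x (g (P * U) m) ->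
  exists j, [/\ j != i, j %% n = m %% n & lev x (g (Q * U) j)]%N.
Proof.
move=> E HU m x i xN Hx.
case: (coefM_split Hx) => [x0|[s [t [Hst H]]]]; first by rewrite x0 eqxx in xN.
rewrite -Hst factor in H.
have gPN : g P s != 0.
  apply: contraNneq xN => H0; move: H; by rewrite H0 !mul0r => /lev_le0 ->.
have gUN : g U t != 0.
  apply: contraNneq xN => H0; move: H; by rewrite H0 mulr0 mul0r => /lev_le0 ->.
case: (phi_le E s) => [H0|[s' [Hs' Hle]]]; first by rewrite H0 eqxx in gPN.
have [t' [Ht' Htm Hlt]] := HU t gUN.
have B1 : lev x (g (Q * U) (s' + t)).
  apply: lev_trans H _; apply: lev_trans (coefM_ge Q U s' t).
  rewrite factor Hs'; apply: lev_mul; exact: lev_mul.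
have B2 : lev x (g (Q * U) (s' + t')).
  apply: lev_trans H _; apply: lev_trans (coefM_ge Q U s' t').
  rewrite factor Hs' Htm; apply: lev_mul.
  apply: lev_trans (lev_mul _ Hle) _; exact: lev_mull.
have [Hi|Hi] := eqVneq (s' + t)%N i.
- exists (s' + t')%N; split => //.
  + by rewrite -Hi eqn_add2l.
  + by rewrite -Hst -modnDm Hs' Htm modnDm.
- exists (s' + t)%N; split => //.
  by rewrite -Hst -modnDm Hs' modnDm.
Qed.


Lemma one_dir (P Q U V : {poly K}) : phi n a P = phi n a Q -> inJ n a U ->
  inJ n a (P * U + V) -> inJ n a (Q * U + V).
Proof.
move=> E HU0 HA0.
have HU := inJ_Pchar HU0.
have HA := inJ_Pchar HA0.
have HQU := inJ_Pchar (inJM Q HU0).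
apply: Pchar_inJ => i; rewrite gD => Hi.
case: (hord (g (Q * U) i) (g V i)); rewrite /qle => H; last first.
  rewrite addrC H in Hi; have [j [Hj1 Hj2 Hj3]] := HQU i Hi.
  exists j; split => //; rewrite gD addrC H.
  exact: (levD_trans (@idemK)).
rewrite H in Hi *.
case: (hord (g (P * U) i) (g V i)); rewrite /qle => H1; last first.
  have [j [Hj1 Hj2 Hj3]] := key E HU i Hi H1.
  by exists j; split => //; rewrite gD; exact: (levD_trans (@idemK)).
have Hi' : g (P * U + V) i != 0 by rewrite gD H1.
have [j [Hj1 Hj2 Hj3]] := HA i Hi'.
rewrite !gD H1 in Hj3.
case: (lev_split Hj3) => Hj4.
  have [j' [Hj'1 Hj'2 Hj'3]] := key E HU i Hi Hj4.
  exists j'; split => //; first by rewrite Hj'2.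
  by rewrite gD; exact: (levD_trans (@idemK)).
exists j; split => //; rewrite gD; apply: lev_trans Hj4 _; exact: lev_addl (@idemK) _ _.
Qed.


Lemma low_le (P Q : {poly K}) : a = 0 -> phi n a P = phi n a Q ->
  forall m, (m < n)%N -> lev P`_m Q`_m.
Proof.
move=> a0 E m hm.
have gm : forall F : {poly K}, g F m = F`_m by move=> F; rewrite /g divn_small // expr0 mulr1.
case: (phi_le E m) => [|[s' [Hs' Hle]]]; first by rewrite gm => ->; exact: lev0.
rewrite gm in Hle.
case: (ltnP s' n) => Hs.
  by move: Hs' Hle; rewrite !modn_small // => ->; rewrite gm.
move: Hle; rewrite /g a0 expr0n.
have -> : (s' %/ n == 0)%N = false by apply/negbTE; rewrite -lt0n divn_gt0.
by rewrite mulr0 => /lev_le0 ->; exact: lev0.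
Qed.

Lemma clause1 (P Q : {poly K}) : phi n a P = phi n a Q ->
  exists U V : {poly K}, inJ n a U /\ inJ n a V /\ P + U = Q + V.
Proof.
move=> E.
have [a0|aN] := eqVneq a 0.
  pose W := \poly_(i < size (P + Q)) (if (n <= i)%N then (P + Q)`_i else 0).
  have cW : forall m, W`_m = if (n <= m)%N then (P + Q)`_m else 0.
    move=> m; rewrite coef_poly; case: ltnP => // Hm.
    by case: ifP => // _; rewrite nth_default.
  have HW : inJ n a W.
    apply: Pchar_inJ => i; rewrite /g cW a0.
    case: leqP => Hi.
      rewrite expr0n.
      have -> : (i %/ n == 0)%N = false by apply/negbTE; rewrite -lt0n divn_gt0.
      by rewrite mulr0 eqxx.
    by rewrite mul0r eqxx.
  exists W, W; split => //; split => //.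
  apply/polyP => m; rewrite !coefD cW.
  case: leqP => Hm.
    by rewrite coefD addrA idemK addrCA idemK.
  rewrite !addr0; apply: lev_anti; first exact: low_le.
  exact: low_le (esym E) _ Hm.
have [y Hy] := inv_ex aN.
pose W := (y%:P * (P + Q)) * ('X^(n * 1) + (a ^+ 1)%:P).
have HW : inJ n a W by apply: inJ_gen.
have EW : W = y%:P * (P + Q) * 'X^(n * 1) + (P + Q).
  rewrite /W mulrDr expr1; congr (_ + _).
  by rewrite mulrAC -polyCM [y * a]mulrC Hy polyC1 mul1r.
have L : forall R, lev R (P + Q) -> R + W = W.
  move=> R HR; rewrite EW; apply: lev_trans HR _; exact: lev_addl (@idemP) _ _.
exists W, W; split => //; split => //.
rewrite (L P (lev_addr (@idemP) _ _)) (L Q (lev_addl (@idemP) _ _)) //.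
Qed.

End Main.

End Aux.

Theorem lemma3p5 (K : comNzSemiRingType) (a : K) (n : nat)
  (hK : quasi_field_char1 K) (hord : totally_ordered K) (hn : (1 <= n)%N)
  (P Q : {poly K}) :
  phi n a P = phi n a Q -> congr_mod (inJ n a) P Q.
Proof.
move=> E; split; first exact: (Aux.clause1 hK hord hn E).
move=> U V HU; split; first exact: (Aux.one_dir hK hord hn E HU).
exact: (Aux.one_dir hK hord hn (esym E) HU).
Qed.
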